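(* Let $\mathcal{B}$ be a boolean algebra and let $\mathcal{M}$ be a well behaved $\mathcal{B}$-valued model for a relational language $\mathcal{L}$. The following are equivalent: (a) $\mathcal{M}$ is full; (b) for all $\mathcal{L}_{\mathcal{M}}$-formulae $\phi(x_0,x_1,\dots,x_n)$ and all $\tau_1,\dots,\tau_n\in M$ there exist $m\in\mathbb{N}$ and $\sigma_1,\dots,\sigma_m\in M$ such that \[\bigvee_{\tau\in M}[\![\phi(\tau,\tau_1,\dots,\tau_n)]\!]=\bigvee_{i=1}^m[\![\phi(\sigma_i,\tau_1,\dots,\tau_n)]\!].\]
   Context: Let $\mathcal{L}$ be a relational language (relation and constant symbols only) and $\mathcal{B}$ a boolean algebra. A $\mathcal{B}$-valued model $\mathcal{M}$ consists of a non-empty set $M$, a map $(\sigma,\tau)\mapsto[\![\sigma=\tau]\!]\in\mathcal{B}$, maps $(\sigma_1,\dots,\sigma_n)\mapsto[\![R(\sigma_1,\dots,\sigma_n)]\!]\in\mathcal{B}$ for each $n$-ary relation symbol $R$, and elements $c^{\mathcal{M}}\in M$ for each constant $c$, such that $[\![\sigma=\sigma]\!]=1$, $[\![\sigma=\tau]\!]=[\![\tau=\sigma]\!]$, $[\![\sigma=\tau]\!]\wedge[\![\tau=\pi]\!]\le[\![\sigma=\pi]\!]$ and $\bigwedge_i[\![\sigma_i=\tau_i]\!]\wedge[\![R(\vec\sigma)]\!]\le[\![R(\vec\tau)]\!]$. Formulas of $\mathcal{L}_{\mathcal{M}}=\mathcal{L}\cup\{c_\sigma:\sigma\in M\}$ without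 free variables are evaluated in the boolean completion $\mathrm{RO}(\mathcal{B}^+)$ of $\mathcal{B}$ (with $\mathcal{B}$ identified with a dense subalgebra): atomic ones as given, $[\![\varphi\wedge\psi]\!]=[\![\varphi]\!]\wedge[\![\psi]\!]$, $[\![\neg\varphi]\!]=\neg[\![\varphi]\!]$, $[\![\exists x\varphi(x)]\!]=\bigvee_{\tau\in M}[\![\varphi(\tau)]\!]$. $\mathcal{M}$ is well behaved if all these values lie in $\mathcal{B}$. For an ultrafilter $G$ on $\mathcal{B}$, $\mathcal{M}/_G$ is the two-valued structure with domain $\{[\sigma]_G:\sigma\in M\}$, where $[\sigma]_G=\{\tau\in M:[\![\tau=\sigma]\!]\in G\}$, in which $R([\sigma_1]_G,\dots,[\sigma_n]_G)$ holds iff $[\![R(\sigma_1,\dots,\sigma_n)]\!]\in G$, and constants are interpreted as $[c^{\mathcal{M}}]_G$. $\mathcal{M}$ is full if for every ultrafilter $G$ on $\mathcal{B}$, every formula $\phi(x_1,\dots,x_n)$ and all $\tau_1,\dots,\tau_n\in M$: $\mathcal{M}/_G\models\phi([\tau_1]_G,\dots,[\tau_n]_G)$ iff $[\![\phi(\tau_1,\dots,\tau_n)]\!]\in G$. *)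

(* Defs.v *)
From mathcomp Require Import all_boot all_order.
Set Implicit Arguments. Unset Strict Implicit. Unset Printing Implicit Defensive.
Import Order.Theory.
Local Open Scope order_scope.

(* Boolean algebras are MathComp's complemented distributive lattices with
   top and bottom: ctbDistrLatticeType. *)

Record language := Language {
  Rsym : Type;
  arity : Rsym -> nat;
  Csym : Type }.

Record bmodel (L : language) (d : Order.disp_t) (B : ctbDistrLatticeType d) :=
  BModel {
  dom :> Type;
  dom_inh : inhabited dom;
  eqv : dom -> dom -> B;
  relv : forall R : Rsym L, ('I_(arity R) -> dom) -> B;
  cstv : Csym L -> dom;
  eqv_refl : forall s, eqv s s = \top;
  eqv_sym : forall s t, eqv s t = eqv t s;
  eqv_trans : forall s t p, eqv s t `&` eqv t p <= eqv s p;
  relv_cong : forall R (s t : 'I_(arity R) -> dom),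
      (\meet_(i < arity R) eqv (s i) (t i)) `&` relv s <= relv t }.

(** Syntax of L_M-formulae (named variables; parameters c_sigma for sigma in M). *)
Inductive term (L : language) (M : Type) :=
  | tvar of nat
  | tcst of Csym L
  | tpar of M.

Inductive formula (L : language) (M : Type) :=
  | fEq of term L M & term L M
  | fRel (R : Rsym L) of ('I_(arity R) -> term L M)
  | fAnd of formula L M & formula L M
  | fNot of formula L M
  | fEx of nat & formula L M.

Definition upd (T : Type) (rho : nat -> T) (x : nat) (v : T) : nat -> T :=
  fun i => if i == x then v else rho i.

(** The boolean completion: a complete boolean algebra C with a sup operator,
    into which B embeds as a dense subalgebra via e. *)
Definition is_lub d (C : porderType d) (P : C -> Prop) (s : C) :=
  (forall c, P c -> c <= s) /\ (forall u, (forall c, P c -> c <= u) -> s <= u).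

Record is_completion d (B : ctbDistrLatticeType d) dC (C : ctbDistrLatticeType dC)
    (e : B -> C) (sup : (C -> Prop) -> C) : Prop := {
  sup_lub : forall P, is_lub P (sup P);
  e_inj : injective e;
  e_meet : forall a b, e (a `&` b) = e a `&` e b;
  e_join : forall a b, e (a `|` b) = e a `|` e b;
  e_compl : forall a, e (~` a) = ~` e a;
  e_top : e \top = \top;
  e_bot : e \bot = \bot;
  e_dense : forall c, c != \bot -> exists b, b != \bot /\ e b <= c }.

Section Semantics.
Variables (L : language) (d : Order.disp_t) (B : ctbDistrLatticeType d).
Variables (dC : Order.disp_t) (C : ctbDistrLatticeType dC).
Variables (e : B -> C) (sup : (C -> Prop) -> C) (M : bmodel L B).

Definition tval (rho : nat -> M) (t : term L M) : M :=
  match t with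
  | tvar i => rho i
  | tcst c => cstv M c
  | tpar s => s
  end.

(** Boolean value [[phi]] in the completion, under an assignment rho of the
    free variables (i.e. the value of the sentence phi(rho)). *)
Fixpoint bval (rho : nat -> M) (phi : formula L M) : C :=
  match phi with
  | fEq t u => e (eqv (tval rho t) (tval rho u))
  | fRel R ts => e (relv (fun i => tval rho (ts i)))
  | fAnd p q => bval rho p `&` bval rho q
  | fNot p => ~` bval rho p
  | fEx x p => sup (fun c => exists tau : M, c = bval (upd rho x tau) p)
  end.

Definition well_behaved : Prop :=
  forall rho phi, exists b : B, bval rho phi = e b.

Definition ultrafilter (G : B -> Prop) : Prop :=
  [/\ G \top, ~ G \bot,
      (forall a b, G a -> a <= b -> G b),
      (forall a b, G a -> G b -> G (a `&` b)) &
      (forall a, G a \/ G (~` a))].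

Record structure := Structure {
  sdom : Type;
  srel : forall R : Rsym L, ('I_(arity R) -> sdom) -> Prop;
  scst : Csym L -> sdom }.

Definition stval (S : structure) (pI : M -> sdom S) (rho : nat -> sdom S)
    (t : term L M) : sdom S :=
  match t with
  | tvar i => rho i
  | tcst c => scst S c
  | tpar s => pI s
  end.

Fixpoint sat (S : structure) (pI : M -> sdom S) (rho : nat -> sdom S)
    (phi : formula L M) : Prop :=
  match phi with
  | fEq t u => stval pI rho t = stval pI rho u
  | fRel R ts => srel (fun i => stval pI rho (ts i))
  | fAnd p q => sat pI rho p /\ sat pI rho q
  | fNot p => ~ sat pI rho p
  | fEx x p => exists a : sdom S, sat pI (upd rho x a) p
  end.

Definition eqclass (G : B -> Prop) (s : M) : M -> Prop := fun t => G (eqv t s).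

Definition qdom (G : B -> Prop) : Type :=
  {A : M -> Prop | exists s : M, A = eqclass G s}.

Definition cls (G : B -> Prop) (s : M) : qdom G :=
  exist _ (eqclass G s) (ex_intro _ s erefl).

Definition quotient (G : B -> Prop) : structure :=
  {| sdom := qdom G;
     srel := fun R (a : 'I_(arity R) -> qdom G) =>
       exists s : 'I_(arity R) -> M, (forall i, a i = cls G (s i)) /\ G (relv s);
     scst := fun c => cls G (cstv M c) |}.

Definition full : Prop :=
  forall G, ultrafilter G ->
  forall (phi : formula L M) (rho : nat -> M),
    sat (S := quotient G) (cls G) (fun i => cls G (rho i)) phi <->
    exists b : B, bval rho phi = e b /\ G b.

Definition witnessed_sups : Prop :=
  forall (phi : formula L M) (x : nat) (rho : nat -> M),
  exists s : seq M,
    sup (fun c => exists tau : M, c = bval (upd rho x tau) phi)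
    = \join_(sg <- s) bval (upd rho x sg) phi.

End Semantics.

(* Main.v *)
Require Import Defs.
From mathcomp Require Import all_boot all_order.
From Stdlib Require Import Classical.
From mathcomp Require Import boolp classical_sets.
Set Implicit Arguments. Unset Strict Implicit. Unset Printing Implicit Defensive.
Import Order.Theory.
Local Open Scope order_scope.

Lemma e_mono d (B : ctbDistrLatticeType d) dC (C : ctbDistrLatticeType dC)
  (e : B -> C) sup (hC : is_completion e sup) a b : a <= b -> e a <= e b.
Proof. by move=> /meet_idPl ab; apply/meet_idPl; rewrite -(e_meet hC) ab. Qed.

Lemma e_refl d (B : ctbDistrLatticeType d) dC (C : ctbDistrLatticeType dC)
  (e : B -> C) sup (hC : is_completion e sup) a b : e a <= e b -> a <= b.
Proof.
by move=> /meet_idPl ab; apply/meet_idPl; apply: (e_inj hC); rewrite (e_meet hC).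
Qed.

Definition pfilt d (B : ctbDistrLatticeType d) (F : B -> Prop) :=
  [/\ F \top, ~ F \bot, (forall a b, F a -> a <= b -> F b) &
      (forall a b, F a -> F b -> F (a `&` b))].

Lemma uf_notC d (B : ctbDistrLatticeType d) (G : B -> Prop) :
  ultrafilter G -> forall a, G a -> ~ G (~` a).
Proof. by case=> _ nb _ hm _ a Ga Gca; apply: nb; rewrite -(meetxC a); apply: hm. Qed.

Lemma uf_prime d (B : ctbDistrLatticeType d) (G : B -> Prop) :
  ultrafilter G -> forall a b, G (a `|` b) -> G a \/ G b.
Proof.
move=> hG a b Gab; have [_ _ up hm ex] := hG.
case: (ex a) => [|Gca]; first by left.
right; apply: (up _ _ (hm _ _ Gab Gca)).
by rewrite meetUl meetxC join0x leIl.
Qed.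

Lemma uf_exists d (B : ctbDistrLatticeType d) (F0 : B -> Prop) :
  pfilt F0 -> exists G, ultrafilter G /\ (forall a, F0 a -> G a).
Proof.
move=> hF0.
pose T := {F : B -> Prop | pfilt F /\ forall a, F0 a -> F a}.
pose R := fun X Y : T => `[< forall a, sval X a -> sval Y a >].
have t0 : T by exists F0; split.
have [|||[G [pG F0G]] Gmax] := @ZL_preorder T t0 R.
- by move=> t; apply/asboolP.
- by move=> r s t /asboolP rs /asboolP st; apply/asboolP => a /rs /st.
- move=> A Atot.
  pose U := fun a => F0 a \/ exists X, A X /\ sval X a.
  have pU : pfilt U /\ forall a, F0 a -> U a.
    have [t01 nb0 up0 m0] := hF0.
    split; last by move=> a; left.
    have sP : forall X : T, pfilt (sval X) /\ forall a, F0 a -> sval X a.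
      by move=> X; exact: proj2_sig X.
    split.
    + by left.
    + case=> //; case=> X [_ Xb]; have [[_ nbX _ _] _] := sP X; exact: nbX.
    + move=> a b [Fa|[X [AX Xa]]] ab.
        by left; apply: up0 ab.
      have [[_ _ upX _] _] := sP X.
      by right; exists X; split => //; apply: upX ab.
    + move=> a b Ua Ub.
      case: Ua => [Fa|[X [AX Xa]]]; case: Ub => [Fb|[Y [AY Yb]]].
      * by left; apply: m0.
      * have [[_ _ _ mY] FY] := sP Y.
        by right; exists Y; split => //; apply: mY => //; apply: FY.
      * have [[_ _ _ mX] FX] := sP X.
        by right; exists X; split => //; apply: mX => //; apply: FX.
      * have [[_ _ _ mY] FY] := sP Y; have [[_ _ _ mX] FX] := sP X.
        case: (Atot X Y AX AY) => /asboolP H.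
          by right; exists Y; split => //; apply: mY => //; apply: H.
        by right; exists X; split => //; apply: mX => //; apply: H.
  exists (exist _ U pU) => s As; apply/asboolP => a sa /=.
  by right; exists s.
- exists G; split => //.
  have [Gt Gb up hm] := pG.
  split => // a.
  case: (Classical_Prop.classic (exists g, G g /\ g `&` a = \bot)) => [[g [Gg ga]]|nex].
    right; apply: up Gg _; by rewrite -disj_leC ga.
  left.
  pose G' := fun c => exists g, G g /\ g `&` a <= c.
  have pG' : pfilt G' /\ forall c, F0 c -> G' c.
    split; last by move=> c /F0G Gc; exists c; split => //; apply: leIl.
    split.
    + by exists \top; split => //; apply: lex1.
    + case=> g [Gg ga]; apply: nex; exists g; split => //.
      by apply: le_anti; rewrite ga le0x.
    + by move=> b c [g [Gg gb]] bc; exists g; split => //; apply: le_trans bc.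
    + move=> b c [g1 [G1 h1]] [g2 [G2 h2]]; exists (g1 `&` g2); split; first by apply: hm.
      rewrite lexI; apply/andP; split.
        by apply: le_trans h1; apply: leI2 => //; apply: leIl.
      by apply: le_trans h2; apply: leI2 => //; apply: leIr.
  have := Gmax (exist _ G' pG').
  have R1 : R (exist _ G (conj pG F0G)) (exist _ G' pG').
    by apply/asboolP => c /= Gc; exists c; split => //; apply: leIl.
  move=> /(_ R1) /asboolP /=; apply.
  by exists \top; split => //; rewrite meet1x.
Qed.

Lemma uf_up d (B : ctbDistrLatticeType d) (G : B -> Prop) :
  ultrafilter G -> forall a b, G a -> a <= b -> G b.
Proof. by case. Qed.

Lemma uf_meet d (B : ctbDistrLatticeType d) (G : B -> Prop) :
  ultrafilter G -> forall a b, G a -> G b -> G (a `&` b).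
Proof. by case. Qed.

Lemma cls_eqP L d (B : ctbDistrLatticeType d) (M : bmodel L B) (G : B -> Prop)
  (hG : ultrafilter G) (s t : M) : cls G s = cls G t <-> G (eqv s t).
Proof.
split.
  move=> /(congr1 sval) /= /(congr1 (fun f => f s)); rewrite /eqclass eqv_refl => <-.
  by case: hG.
move=> Gst; rewrite /cls; apply: eq_exist; apply: funext => u; apply: propext.
rewrite /eqclass; split => h.
  exact: (uf_up hG (uf_meet hG h Gst) (eqv_trans u s t)).
have Gts : G (eqv t s) by rewrite eqv_sym.
exact: (uf_up hG (uf_meet hG h Gts) (eqv_trans u t s)).
Qed.

Lemma stval_cls L d (B : ctbDistrLatticeType d) (M : bmodel L B) (G : B -> Prop)
  (rho : nat -> M) (rho' : nat -> qdom M G) :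
  (forall i, rho' i = cls G (rho i)) ->
  forall t, stval (S := quotient M G) (cls G) rho' t = cls G (Defs.tval rho t).
Proof. by move=> h [i|c|s] //=; rewrite h. Qed.

Lemma upd_cls L d (B : ctbDistrLatticeType d) (M : bmodel L B) (G : B -> Prop)
  (rho : nat -> M) (rho' : nat -> qdom M G) x s :
  (forall i, rho' i = cls G (rho i)) ->
  forall i, upd rho' x (cls G s) i = cls G (upd rho x s i).
Proof. by move=> h i; rewrite /upd; case: eqP. Qed.

Lemma join_seq d (B : ctbDistrLatticeType d) dC (C : ctbDistrLatticeType dC)
  (e : B -> C) sup (hC : is_completion e sup) (T : Type) (F : T -> C)
  (hF : forall t, exists b, F t = e b) (s : seq T) :
  exists bs, \join_(t <- s) F t = e bs /\
    (forall G : B -> Prop, ultrafilter G -> G bs ->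
       exists t b, F t = e b /\ G b).
Proof.
elim: s => [|t s [bs [Hs HG]]].
  exists \bot; rewrite big_nil (e_bot hC); split => // G [_ nb _ _ _] //.
have [b Hb] := hF t.
exists (b `|` bs); rewrite big_cons Hs Hb (e_join hC); split => // G hG.
by case/(uf_prime hG) => [Gb|/(HG G hG) //]; exists t, b.
Qed.

Lemma join_le d (C : ctbDistrLatticeType d) (T : Type) (F : T -> C) (s : seq T) u :
  (forall t, F t <= u) -> \join_(t <- s) F t <= u.
Proof. by move=> h; elim: s => [|t s IH]; rewrite ?big_nil ?le0x // big_cons leUx h IH. Qed.

Lemma los L d (B : ctbDistrLatticeType d) dC (C : ctbDistrLatticeType dC)
  (e : B -> C) sup (hC : is_completion e sup) (M : bmodel L B)
  (wb : well_behaved e sup M) (ws : witnessed_sups e sup M)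
  (G : B -> Prop) (hG : ultrafilter G) :
  forall phi rho (rho' : nat -> qdom M G), (forall i, rho' i = cls G (rho i)) ->
  forall b, bval e sup rho phi = e b ->
    (sat (S := quotient M G) (cls G) rho' phi <-> G b).
Proof.
have einj := e_inj hC.
elim=> [t u|R ts|p IHp q IHq|p IHp|x p IHp] rho rho' h b /= hb.
- move/einj: hb => <-; rewrite !(stval_cls h); exact: cls_eqP.
- move/einj: hb => <-; split.
    case=> s [hs Gs].
    have Gm : G (\meet_(i < arity R) eqv (s i) (Defs.tval rho (ts i))).
      apply: (big_ind G); first by case: hG.
        by move=> a c; apply: uf_meet.
      move=> i _; move: (hs i); rewrite (stval_cls h) => /(cls_eqP hG).
      by rewrite eqv_sym.
    exact: (uf_up hG (uf_meet hG Gm Gs) (relv_cong s _)).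
  by move=> Gr; exists (fun i => Defs.tval rho (ts i)); split => // i; rewrite (stval_cls h).
- have [bp hp] := wb rho p; have [bq hq] := wb rho q.
  move: hb; rewrite hp hq -(e_meet hC) => /einj <-.
  rewrite (IHp _ _ h _ hp) (IHq _ _ h _ hq); split.
    by case=> ? ?; apply: uf_meet.
  by move=> Gm; split; apply: (uf_up hG Gm); [apply: leIl|apply: leIr].
- have [bp hp] := wb rho p.
  move: hb; rewrite hp -(e_compl hC) => /einj <-.
  rewrite (IHp _ _ h _ hp); split.
    by move=> nG; have [_ _ _ _ ex] := hG; case: (ex bp).
  by move=> Gc Gp; exact: (uf_notC hG Gp Gc).
- split.
    case=> -[A [s HA]] Hs.
    have Ea : exist (fun A => exists s, A = eqclass G s) A (ex_intro _ s HA) = cls G s.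
      by apply: eq_exist.
    rewrite Ea in Hs.
    have [bs hbs] := wb (upd rho x s) p.
    have Gbs := (IHp _ _ (upd_cls x s h) _ hbs).1 Hs.
    apply: (uf_up hG Gbs); apply: (e_refl hC); rewrite -hb -hbs.
    by apply: (sup_lub hC _).1; exists s.
  move=> Gb.
  have [s0 Hs0] := ws p x rho.
  have [bs [Hbs HG]] := join_seq hC (fun t => wb (upd rho x t) p) s0.
  move: hb; rewrite Hs0 Hbs => /einj Eb; subst bs.
  have [t [b' [Eb' Gb']]] := HG G hG Gb.
  exists (cls G t); exact: (IHp _ _ (upd_cls x t h) _ Eb').2.
Qed.

Theorem mainTheorem2 (L : language) (d : Order.disp_t) (B : ctbDistrLatticeType d)
    (dC : Order.disp_t) (C : ctbDistrLatticeType dC)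
    (e : B -> C) (sup : (C -> Prop) -> C) (hC : is_completion e sup)
    (M : bmodel L B) :
  well_behaved e sup M ->
  (full e sup M <-> witnessed_sups e sup M).
Proof.
move=> wb; split; last first.
  move=> ws G hG phi rho; split.
    move=> Hs; have [b hb] := wb rho phi; exists b; split => //.
    exact: ((@los _ _ _ _ _ _ _ hC _ wb ws G hG phi rho (fun i => cls G (rho i)) (fun i => erefl) b hb).1 Hs).
  by case=> b [hb Gb]; exact: ((@los _ _ _ _ _ _ _ hC _ wb ws G hG phi rho (fun i => cls G (rho i)) (fun i => erefl) b hb).2 Gb).
move=> hfull phi x rho.
have [b hb] := wb rho (fEx x phi); rewrite /= in hb.
pose F := fun t => bval e sup (upd rho x t) phi.
have Fle : forall t, F t <= e b.
  by move=> t; rewrite -hb; apply: (sup_lub hC _).1; exists t.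
suff [s hs] : exists s, e b <= \join_(t <- s) F t.
  exists s; rewrite hb; apply: le_anti; rewrite hs /=; exact: join_le.
apply: Classical_Prop.NNPP => hn.
pose F0 := fun a => exists s c, \join_(t <- s) F t = e c /\ b `&` ~` c <= a.
have pF0 : pfilt F0.
  split.
  - by exists [::], \bot; rewrite big_nil (e_bot hC); split => //; apply: lex1.
  - case=> s [c [Hc hc]]; apply: hn; exists s; rewrite Hc; apply: (e_mono hC).
    have : b `&` ~` c == \bot by rewrite eq_le hc le0x.
    by rewrite disj_leC complK.
  - by move=> a a' [s [c [Hc hc]]] aa'; exists s, c; split => //; apply: le_trans aa'.
  - move=> a1 a2 [s1 [c1 [H1 h1]]] [s2 [c2 [H2 h2]]].
    exists (s1 ++ s2), (c1 `|` c2); rewrite big_cat /= H1 H2 (e_join hC); split => //.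
    rewrite complU lexI; apply/andP; split.
      by apply: le_trans h1; apply: leI2 => //; apply: leIl.
    by apply: le_trans h2; apply: leI2 => //; apply: leIr.
have [G [hG F0G]] := uf_exists pF0.
have Gb : G b.
  apply: F0G; exists [::], \bot; rewrite big_nil (e_bot hC) compl0 meetx1; split => //.
have := (hfull G hG (fEx x phi) rho).2 (ex_intro _ b (conj hb Gb)).
case=> -[A [t HA]] Ht.
have Ea : exist (fun A => exists s, A = eqclass G s) A (ex_intro _ t HA) = cls G t.
  by apply: eq_exist.
rewrite Ea in Ht.
have Ht' : sat (S := quotient M G) (cls G) (fun i => cls G (upd rho x t i)) phi.
  have -> : (fun i => cls G (upd rho x t i)) = upd (fun i => cls G (rho i)) x (cls G t).
    by apply: funext => i; rewrite (upd_cls x t (fun i => erefl)).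
  exact: Ht.
have [b' [Eb' Gb']] := (hfull G hG phi (upd rho x t)).1 Ht'.
have Gc : G (~` b').
  apply: F0G; exists [:: t], b'; rewrite big_cons big_nil joinx0; split => //.
  exact: leIr.
exact: (uf_notC hG Gb' Gc).
Qed.
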